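(* For every integer $n\ge 1$, as rational functions of $x,x_0,x_1$, $$P_n(x;q^{\frac12}x_0,x_1)=P_n(x;x_0,x_1)+\lambda_n(x_0,x_1)\,P_{n-1}(x;x_0,x_1),$$ where $$\lambda_n(x_0,x_1)=\frac{q^{-\frac12}(1-q^n)^2\left(1-\frac{q^n}{x_1^2}\right)^2}{x_0^2\left(1-\frac{q^{2n-1}}{x_0^2x_1^2}\right)\left(1-\frac{q^{2n}}{x_0^2x_1^2}\right)}.$$
   Context: Let $q$ be a complex parameter with $0<|q|<1$, with a fixed choice of $q^{1/4}$ and $q^{k/4}:=(q^{1/4})^k$; $x,x_0,x_1$ are indeterminates. Notation: $(y)_n=(y;q)_n=\prod_{i=1}^{n}(1-yq^{i-1})$, $(y_1,\dots,y_k)_n=(y_1)_n\cdots(y_k)_n$. For $n\ge 0$ define the (reduced) Askey–Wilson polynomial $$P_n(x;x_0,x_1)=(-1)^nq^{-\frac n2}\frac{\left(q,\frac{q}{x_0^2},\frac{q}{x_1^2}\right)_n}{\left(\frac{q^{n+1}}{x_0^2x_1^2}\right)_n}\sum_{k=0}^{n}q^k\frac{\left(q^{-n},\frac{q^{n+1}}{x_0^2x_1^2}\right)_k}{\left(q,q,\frac{q}{x_0^2},\frac{q}{x_1^2}\right)_k}\,\left(-q^{\frac12}x,-q^{\frac12}x^{-1}\right)_k .$$ This is the Askey–Wilson polynomial $P_n^{(a,b,c,d)}(x)=\frac{(ab,ac,ad)_n}{a^n(abcdq^{n-1})_n}\sum_{k=0}^n\frac{(q^{-n},q^{n-1}abcd,ax,ax^{-1})_k}{(q,ab,ac,ad)_k}q^k$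 with $(a,b,c,d)=(-q^{1/2},-q^{1/2},-q^{1/2}/x_0^2,-q^{1/2}/x_1^2)$; it is a symmetric Laurent polynomial in $x$ of the form $x^n+x^{-n}+$(lower terms). *)

(* Defs.v *)
From HB Require Import structures.
From mathcomp Require Import all_boot all_order all_algebra.
From mathcomp Require Import reals.
From mathcomp Require Import complex.
From mathcomp Require Import mpoly.
Set Implicit Arguments. Unset Strict Implicit. Unset Printing Implicit Defensive.
Import GRing.Theory Num.Theory.
Local Open Scope ring_scope.

Definition qpoch (K : fieldType) (q y : K) (n : nat) : K :=
  \prod_(i < n) (1 - y * q ^+ i).

(* The reduced Askey-Wilson polynomial P_n(x; x0, x1), with the base q
   given through its fixed fourth root t = q^(1/4): q = t^4, q^(1/2) = t^2. *)
Definition AWP (K : fieldType) (t : K) (n : nat) (x x0 x1 : K) : K :=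
  let q := t ^+ 4 in
  let sq := t ^+ 2 in
  (-1) ^+ n * sq ^- n
  * (qpoch q q n * qpoch q (q / x0 ^+ 2) n * qpoch q (q / x1 ^+ 2) n)
  / qpoch q (q ^+ n.+1 / (x0 ^+ 2 * x1 ^+ 2)) n
  * \sum_(k < n.+1)
      q ^+ k
      * (qpoch q (q ^- n) k * qpoch q (q ^+ n.+1 / (x0 ^+ 2 * x1 ^+ 2)) k)
      / (qpoch q q k * qpoch q q k * qpoch q (q / x0 ^+ 2) k
         * qpoch q (q / x1 ^+ 2) k)
      * (qpoch q (- (sq * x)) k * qpoch q (- (sq / x)) k).

Definition AWlambda (K : fieldType) (t : K) (n : nat) (x0 x1 : K) : K :=
  let q := t ^+ 4 in
  let sq := t ^+ 2 in
  sq ^-1 * (1 - q ^+ n) ^+ 2 * (1 - q ^+ n / x1 ^+ 2) ^+ 2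
  / (x0 ^+ 2 * (1 - q ^+ (n.*2).-1 / (x0 ^+ 2 * x1 ^+ 2))
              * (1 - q ^+ (n.*2) / (x0 ^+ 2 * x1 ^+ 2))).

Definition RatFun3 (R : realType) : fieldType := {fraction {mpoly R[i][3]}}.

Definition rfC (R : realType) (c : R[i]) : RatFun3 R :=
  @FracField.tofrac _ (c%:MP : {mpoly R[i][3]}).

(* the indeterminates: j = 0 is x, j = 1 is x0, j = 2 is x1 *)
Definition rfX (R : realType) (j : 'I_3) : RatFun3 R :=
  @FracField.tofrac _ ('X_j : {mpoly R[i][3]}).

(* Main.v *)
Require Import Defs.
From HB Require Import structures.
From mathcomp Require Import all_boot all_order all_algebra.
From mathcomp Require Import reals complex mpoly.
From mathcomp Require Import ring.
Set Implicit Arguments. Unset Strict Implicit. Unset Printing Implicit Defensive.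
Import GRing.Theory Num.Theory.
Local Open Scope ring_scope.

Lemma qpS_last (K : fieldType) (q y : K) k :
  qpoch q y k.+1 = qpoch q y k * (1 - y * q ^+ k).
Proof. by rewrite /qpoch big_ord_recr. Qed.

Lemma qpS_first (K : fieldType) (q y : K) k :
  qpoch q y k.+1 = (1 - y) * qpoch q (y * q) k.
Proof.
rewrite /qpoch big_ord_recl expr0 mulr1; congr (_ * _).
by apply: eq_bigr => i _; rewrite /bump /= exprS mulrA.
Qed.

Lemma qpD (K : fieldType) (q y : K) k j :
  qpoch q y (k + j) = qpoch q y k * qpoch q (y * q ^+ k) j.
Proof.
rewrite /qpoch big_split_ord /=; congr (_ * _).
by apply: eq_bigr => i _; rewrite exprD mulrA.
Qed.

Lemma qp_neq0 (K : fieldType) (q y : K) k :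
  (forall i, (i < k)%N -> y * q ^+ i != 1) -> qpoch q y k != 0.
Proof.
move=> h; rewrite /qpoch; apply/prodf_neq0 => i _.
by rewrite subr_eq0 eq_sym h.
Qed.

Definition cf (K : fieldType) (t : K) (n k : nat) (X0 X1 : K) : K :=
  let q := t ^+ 4 in
  let sq := t ^+ 2 in
  (-1) ^+ n * sq ^- n
  * (qpoch q q n * qpoch q (q / X0) n * qpoch q (q / X1) n)
  / qpoch q (q ^+ n.+1 / (X0 * X1)) n
  * (q ^+ k
      * (qpoch q (q ^- n) k * qpoch q (q ^+ n.+1 / (X0 * X1)) k)
      / (qpoch q q k * qpoch q q k * qpoch q (q / X0) k
         * qpoch q (q / X1) k)).

Lemma AWP_cf (K : fieldType) (t : K) n x x0 x1 :
  AWP t n x x0 x1 = \sum_(k < n.+1) cf t n k (x0 ^+ 2) (x1 ^+ 2)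
     * (qpoch (t ^+ 4) (- (t ^+ 2 * x)) k * qpoch (t ^+ 4) (- (t ^+ 2 / x)) k).
Proof. rewrite /AWP mulr_sumr; apply: eq_bigr => k _. by rewrite /cf /= -!mulrA. Qed.
Lemma nz_of (K : fieldType) (a b c : K) : c != 0 -> b != 0 -> c = (b - a) / b -> b - a != 0.
Proof. by move=> hc hb E; move: hc; rewrite E mulf_eq0 invr_eq0 (negbTE hb) orbF. Qed.

Definition lamU (K : fieldType) (t : K) (n : nat) (u v : K) : K :=
  let q := t ^+ 4 in
  let sq := t ^+ 2 in
  sq ^-1 * (1 - q ^+ n) ^+ 2 * (1 - q ^+ n / v) ^+ 2
  / (u * (1 - q ^+ (n.*2).-1 / (u * v))
              * (1 - q ^+ (n.*2) / (u * v))).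

Lemma key (K : fieldType) (t u v : K) k e
  (ht : t != 0) (hu : u != 0) (hv : v != 0)
  (hq : forall j, (0 < j)%N -> t ^+ 4 ^+ j != 1)
  (hU : forall j, t ^+ 4 ^+ j / u != 1)
  (hV : forall j, t ^+ 4 ^+ j / v != 1)
  (hW : forall j, t ^+ 4 ^+ j / (u * v) != 1) :
  cf t (k + e).+1 k (t ^+ 4 * u) v
  = cf t (k + e).+1 k u v + lamU t (k + e).+1 u v * cf t (k + e) k u v.
Proof.
rewrite /cf /lamU /=.
set q := t ^+ 4. set sq := t ^+ 2.
have q0 : q != 0 by rewrite expf_neq0.
have E1 : qpoch q q (k+e).+1 = qpoch q q (k+e) * (1 - q * q^+(k+e)) by rewrite qpS_last.
have E2 : qpoch q (q/u) (k+e).+1 = qpoch q (q/u) k * qpoch q (q/u*q^+k) e * (1 - q/u*q^+(k+e)).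
  by rewrite qpS_last qpD.
have E3 : qpoch q (q/v) (k+e).+1 = qpoch q (q/v) (k+e) * (1 - q/v*q^+(k+e)) by rewrite qpS_last.
have E4 : qpoch q (q^+(k+e).+2/(u*v)) (k+e).+1 = qpoch q (q^+(k+e).+2/(u*v)) k
    * qpoch q (q^+(k+e).+2/(u*v)*q^+k) e * (1 - q^+(k+e).+2/(u*v)*q^+(k+e)).
  by rewrite qpS_last qpD.
have E2' : qpoch q (q/(q*u)) (k+e).+1 = qpoch q (q/(q*u)) k * (1 - q/(q*u)*q^+k)
    * qpoch q (q/u*q^+k) e.
  rewrite -addnS qpD qpS_first mulrA; congr (_ * qpoch _ _ _); field.
  by rewrite q0 hu.
have E4' : qpoch q (q^+(k+e).+2/(q*u*v)) (k+e).+1 = qpoch q (q^+(k+e).+2/(q*u*v)) k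
    * (1 - q^+(k+e).+2/(q*u*v)*q^+k) * qpoch q (q^+(k+e).+2/(u*v)*q^+k) e.
  rewrite -addnS qpD qpS_first mulrA; congr (_ * qpoch _ _ _); field.
  by rewrite q0 hu hv.
have E2m : qpoch q (q/u) (k+e) = qpoch q (q/u) k * qpoch q (q/u*q^+k) e by rewrite qpD.
have E4m : qpoch q (q^+(k+e).+1/(u*v)) (k+e) = qpoch q (q^+(k+e).+1/(u*v)) k
   * qpoch q (q^+(k+e).+1/(u*v)*q^+k) e by rewrite qpD.
have R1 : qpoch q (q^+(k+e).+1/(u*v)*q^+k) e * (1 - q^+(k+e).+1/(u*v)*q^+k*q^+e)
   = (1 - q^+(k+e).+1/(u*v)*q^+k) * qpoch q (q^+(k+e).+2/(u*v)*q^+k) e.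
  rewrite -qpS_last qpS_first; congr (_ * qpoch _ _ _).
  by rewrite mulrAC [_ / _ * q]mulrAC -exprSr.
have R2 : qpoch q (q ^- (k+e).+1) k * (1 - q ^- (k+e).+1 * q^+k)
   = (1 - q ^- (k+e).+1) * qpoch q (q ^- (k+e)) k.
  rewrite -qpS_last qpS_first; congr (_ * qpoch _ _ _).
  by rewrite exprS invfM mulrAC mulVf // mul1r.
rewrite E1 E2 E3 E4 E2' E4' E2m E4m.
have nW : forall j, 1 - q^+j/(u*v) != 0 by move=> j; rewrite subr_eq0 eq_sym hW.
have nU : forall j, 1 - q^+j/u != 0 by move=> j; rewrite subr_eq0 eq_sym hU.
have nV : forall j, 1 - q^+j/v != 0 by move=> j; rewrite subr_eq0 eq_sym hV.
have ml : forall a i, q^+a/(u*v) * q^+i = q^+(a+i)/(u*v) by move=> a i; rewrite mulrAC -exprD.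
have nQk : qpoch q q k != 0.
  by apply: qp_neq0 => i _; rewrite -exprS hq.
have nUk : qpoch q (q/u) k != 0.
  by apply: qp_neq0 => i _; rewrite mulrAC -exprS hU.
have nVk : qpoch q (q/v) k != 0.
  by apply: qp_neq0 => i _; rewrite mulrAC -exprS hV.
have nU0k : qpoch q (q/(q*u)) k != 0.
  apply: qp_neq0 => i _; rewrite invfM mulrA mulfV // mul1r mulrC; exact: hU.
have nW1k : qpoch q (q^+(k+e).+2/(u*v)) k != 0.
  by apply: qp_neq0 => i _; rewrite ml hW.
have nW2k : qpoch q (q^+(k+e).+1/(u*v)) k != 0.
  by apply: qp_neq0 => i _; rewrite ml hW.
have nW0k : qpoch q (q^+(k+e).+2/(q*u*v)) k != 0.
  apply: qp_neq0 => i _.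
  have -> : q^+(k+e).+2/(q*u*v) * q^+i = q^+((k+e).+1 + i)/(u*v).
    rewrite exprD !exprS; field; by rewrite q0 hu hv.
  exact: hW.
have nBe : qpoch q (q^+(k+e).+2/(u*v)*q^+k) e != 0.
  by apply: qp_neq0 => i _; rewrite !ml hW.
have n1 : 1 - q^+(k+e).+1/(u*v)*q^+k*q^+e != 0 by rewrite !ml nW.
have n2 : 1 - q ^- (k+e).+1 * q^+k != 0.
  rewrite -addnS exprD invfM mulrAC mulVf ?expf_neq0 // mul1r.
  by rewrite subr_eq0 eq_sym invr_eq1 hq.
have n3 : 1 - q^+(k+e).+2/(u*v)*q^+(k+e) != 0 by rewrite ml nW.
have n4 : 1 - q^+(k+e).+2/(q*u*v)*q^+k != 0.
  have -> : q^+(k+e).+2/(q*u*v) * q^+k = q^+((k+e).+1 + k)/(u*v).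
    rewrite exprD !exprS; field; by rewrite q0 hu hv.
  exact: nW.
have ECe : qpoch q (q^+(k+e).+1/(u*v)*q^+k) e = (1 - q^+(k+e).+1/(u*v)*q^+k)
   * qpoch q (q^+(k+e).+2/(u*v)*q^+k) e / (1 - q^+(k+e).+1/(u*v)*q^+k*q^+e).
  by rewrite -R1 mulfK.
have ENn : qpoch q (q ^- (k+e).+1) k = (1 - q ^- (k+e).+1) * qpoch q (q ^- (k+e)) k
   / (1 - q ^- (k+e).+1 * q^+k).
  by rewrite -R2 mulfK.
rewrite ECe ENn.
have nl1 : 1 - q ^+ (k + e).*2.+1 / (u * v) != 0 by exact: nW.
have nl2 : 1 - q ^+ (k + e).+1.*2 / (u * v) != 0 by exact: nW.
move: nQk nUk nVk nU0k nW1k nW2k nW0k nBe n1 n2 n3 n4 nl1 nl2.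
set Qm := qpoch q q (k+e). set Qk := qpoch q q k. set Uk := qpoch q (q/u) k.
set A := qpoch q (q/u*q^+k) e. set Vm := qpoch q (q/v) (k+e). set Vk := qpoch q (q/v) k.
set W1k := qpoch q (q^+(k+e).+2/(u*v)) k. set Be := qpoch q (q^+(k+e).+2/(u*v)*q^+k) e.
set U0k := qpoch q (q/(q*u)) k. set W0k := qpoch q (q^+(k+e).+2/(q*u*v)) k.
set W2k := qpoch q (q^+(k+e).+1/(u*v)) k. set Nm := qpoch q (q ^- (k+e)) k.
clearbody Qm Qk Uk A Vm Vk W1k Be U0k W0k W2k Nm.
rewrite doubleS -!muln2 !exprS !exprM !exprD.
have sq0 : sq != 0 by rewrite expf_neq0.
have KK0 : q^+k != 0 by rewrite expf_neq0.
have EE0 : q^+e != 0 by rewrite expf_neq0.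
move: sq0 q0 hu hv KK0 EE0.
set KK := q ^+ k. set EE := q ^+ e.
clearbody KK EE.
move=> sq0 q0 hu hv KK0 EE0 nQk nUk nVk nU0k nW1k nW2k nW0k nBe n1 n2 n3 n4 nl1 nl2.
have uv0 : u * v != 0 by rewrite mulf_neq0.
have s1 : u * v - q * (KK * EE) * KK * EE != 0.
  by apply: (nz_of n1 uv0); field; rewrite hu hv.
have s2 : u * v - q * (KK * EE) * KK != 0.
  by apply: (nz_of n4 uv0); field; rewrite q0 hu hv.
have s3 : u * v - q * (q * (KK * EE) ^+ 2) != 0.
  by apply: (nz_of nl2 uv0); field; rewrite hu hv.
have s4 : q * EE - 1 != 0.
  by apply: (nz_of n2 (mulf_neq0 q0 EE0)); field; rewrite q0 KK0 EE0.
field.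
by rewrite ?(nVk, nUk, nQk, hu, hv, s1, nBe, s2, nW2k, s3, sq0, EE0, KK0, q0, s4, nW1k, nU0k, nW0k, expf_neq0).
Qed.

Lemma key' (K : fieldType) (t u v : K) k m
  (ht : t != 0) (hu : u != 0) (hv : v != 0)
  (hq : forall j, (0 < j)%N -> t ^+ 4 ^+ j != 1)
  (hU : forall j, t ^+ 4 ^+ j / u != 1)
  (hV : forall j, t ^+ 4 ^+ j / v != 1)
  (hW : forall j, t ^+ 4 ^+ j / (u * v) != 1) : (k <= m)%N ->
  cf t m.+1 k (t ^+ 4 * u) v
  = cf t m.+1 k u v + lamU t m.+1 u v * cf t m k u v.
Proof. by move=> h; rewrite -(subnKC h); apply: key. Qed.

Lemma last_term (K : fieldType) (t u v : K) n
  (ht : t != 0) (hu : u != 0) (hv : v != 0)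
  (hq : forall j, (0 < j)%N -> t ^+ 4 ^+ j != 1)
  (hU : forall j, t ^+ 4 ^+ j / u != 1)
  (hV : forall j, t ^+ 4 ^+ j / v != 1)
  (hW : forall j, t ^+ 4 ^+ j / (u * v) != 1) :
  cf t n n (t ^+ 4 * u) v = cf t n n u v.
Proof.
rewrite /cf /=.
set q := t ^+ 4. set sq := t ^+ 2.
have q0 : q != 0 by rewrite expf_neq0.
have sq0 : sq != 0 by rewrite expf_neq0.
have ml : forall a i, q^+a/(u*v) * q^+i = q^+(a+i)/(u*v) by move=> a i; rewrite mulrAC -exprD.
have n1 : qpoch q q n != 0 by apply: qp_neq0 => i _; rewrite -exprS hq.
have n2 : qpoch q (q/u) n != 0 by apply: qp_neq0 => i _; rewrite mulrAC -exprS hU.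
have n3 : qpoch q (q/v) n != 0 by apply: qp_neq0 => i _; rewrite mulrAC -exprS hV.
have n4 : qpoch q (q/(q*u)) n != 0.
  apply: qp_neq0 => i _; rewrite invfM mulrA mulfV // mul1r mulrC; exact: hU.
have n5 : qpoch q (q^+n.+1/(u*v)) n != 0 by apply: qp_neq0 => i _; rewrite ml hW.
have n6 : qpoch q (q^+n.+1/(q*u*v)) n != 0.
  apply: qp_neq0 => i _.
  have -> : q^+n.+1/(q*u*v) * q^+i = q^+(n + i)/(u*v).
    rewrite exprD !exprS; field; by rewrite q0 hu hv.
  exact: hW.
move: n1 n2 n3 n4 n5 n6.
set A1 := qpoch q q n. set A2 := qpoch q (q/u) n. set A3 := qpoch q (q/v) n.
set A4 := qpoch q (q/(q*u)) n. set A5 := qpoch q (q^+n.+1/(u*v)) n.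
set A6 := qpoch q (q^+n.+1/(q*u*v)) n.
clearbody A1 A2 A3 A4 A5 A6.
move=> n1 n2 n3 n4 n5 n6.
field.
by rewrite ?(n1, n2, n3, n4, n5, n6, sq0, q0, expf_neq0).
Qed.

Lemma main_gen (K : fieldType) (t x x0 x1 : K) m
  (ht : t != 0) (hu : x0 ^+ 2 != 0) (hv : x1 ^+ 2 != 0)
  (hq : forall j, (0 < j)%N -> t ^+ 4 ^+ j != 1)
  (hU : forall j, t ^+ 4 ^+ j / x0 ^+ 2 != 1)
  (hV : forall j, t ^+ 4 ^+ j / x1 ^+ 2 != 1)
  (hW : forall j, t ^+ 4 ^+ j / (x0 ^+ 2 * x1 ^+ 2) != 1) :
  AWP t m.+1 x (t ^+ 2 * x0) x1
  = AWP t m.+1 x x0 x1 + AWlambda t m.+1 x0 x1 * AWP t m x x0 x1.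
Proof.
have -> : AWlambda t m.+1 x0 x1 = lamU t m.+1 (x0 ^+ 2) (x1 ^+ 2) by [].
have E : (t ^+ 2 * x0) ^+ 2 = t ^+ 4 * x0 ^+ 2 by rewrite exprMn -exprM.
rewrite !AWP_cf E big_ord_recr [in RHS]big_ord_recr /=.
rewrite mulr_sumr -addrA [_ + \sum_(_ < _) _]addrC addrA -big_split /=.
congr (_ + _).
  rewrite -big_split; apply: eq_bigr => i _ /=.
  by rewrite key' // ?mulrDl ?mulrA // -ltnS.
by rewrite last_term.
Qed.
Lemma rfCX (R : realType) (c : R[i]) n : rfC c ^+ n = rfC (c ^+ n).
Proof. by rewrite /rfC !rmorphXn. Qed.

Lemma rfC_eq (R : realType) (c d : R[i]) : (rfC c == rfC d) = (c == d).
Proof. by rewrite /rfC tofrac_eq mpolyC_eq. Qed.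

Lemma rf_ne (R : realType) (c : R[i]) (p : {mpoly R[i][3]}) :
  meval (fun _ => 0) p = 0 -> meval (fun _ => 1) p = 1 ->
  (@FracField.tofrac _ p != 0) /\ (rfC c / @FracField.tofrac _ p != 1).
Proof.
move=> h0 h1.
have p0 : p != 0 by apply/eqP => E; move: h1; rewrite E meval0 => /eqP; rewrite eq_sym oner_eq0.
have P0 : @FracField.tofrac _ p != 0 by rewrite tofrac_eq0.
split; first exact: P0.
apply/eqP => h.
have : rfC c = @FracField.tofrac _ p by rewrite -[LHS](divfK P0) h mul1r.
rewrite /rfC => /eqP; rewrite tofrac_eq => /eqP E.
have := h1; rewrite -E mevalC => c1.
have := h0; rewrite -E mevalC c1 => /eqP; rewrite oner_eq0.
done.
Qed.

Theorem mainTheorem1 (R : realType) (t : R[i])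
    (hq0 : 0 < `|t ^+ 4|) (hq1 : `|t ^+ 4| < 1) (n : nat) (hn : (1 <= n)%N) :
  let x  := @rfX R 0 in
  let x0 := @rfX R 1 in
  let x1 := @rfX R 2 in
  AWP (rfC t) n x (rfC t ^+ 2 * x0) x1
  = AWP (rfC t) n x x0 x1
    + AWlambda (rfC t) n x0 x1 * AWP (rfC t) n.-1 x x0 x1.
Proof.
move=> x x0 x1.
case: n hn => // m _.
have t40 : t ^+ 4 != 0 by rewrite -normr_gt0.
have t0 : t != 0 by apply: contraNneq t40 => ->; rewrite expr0n.
have rfC1 : rfC (1 : R[i]) = 1 by rewrite /rfC !rmorph1.
have hX : forall i, @rfX R i ^+ 2 = @FracField.tofrac _ ('X_i ^+ 2 : {mpoly R[i][3]}).
  by move=> i; rewrite /rfX rmorphXn.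
have hXX : @rfX R 1 ^+ 2 * @rfX R 2 ^+ 2
   = @FracField.tofrac _ ('X_1 ^+ 2 * 'X_2 ^+ 2 : {mpoly R[i][3]}).
  by rewrite /rfX rmorphM !rmorphXn.
have ev : forall (c : R[i]) i, meval (fun _ => c) ('X_i ^+ 2 : {mpoly R[i][3]}) = c ^+ 2.
  by move=> c i; rewrite expr2 mevalM mevalXU.
have ev2 : forall (c : R[i]), meval (fun _ => c) ('X_1 ^+ 2 * 'X_2 ^+ 2 : {mpoly R[i][3]}) = c ^+ 2 * c ^+ 2.
  by move=> c; rewrite mevalM !ev.
have e0 : forall i, meval (fun _ => 0) ('X_i ^+ 2 : {mpoly R[i][3]}) = 0.
  by move=> i; rewrite ev expr0n.
have e1 : forall i, meval (fun _ => 1) ('X_i ^+ 2 : {mpoly R[i][3]}) = 1.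
  by move=> i; rewrite ev expr1n.
have e20 : meval (fun _ => 0) ('X_1 ^+ 2 * 'X_2 ^+ 2 : {mpoly R[i][3]}) = 0.
  by rewrite ev2 expr0n mul0r.
have e21 : meval (fun _ => 1) ('X_1 ^+ 2 * 'X_2 ^+ 2 : {mpoly R[i][3]}) = 1.
  by rewrite ev2 expr1n mul1r.
apply: main_gen.
- by rewrite /rfC tofrac_eq0 mpolyC_eq0.
- by rewrite /x0 hX; exact: (rf_ne 0 (e0 _) (e1 _)).1.
- by rewrite /x1 hX; exact: (rf_ne 0 (e0 _) (e1 _)).1.
- move=> j hj; rewrite !rfCX -rfC1 rfC_eq; apply/eqP => h.
  have := exprn_ilt1 j (normr_ge0 (t ^+ 4)) hq1.
  rewrite -normrX h normr1 Order.POrderTheory.ltxx => E; move: hj; by rewrite lt0n -E.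
- by move=> j; rewrite /x0 hX !rfCX; exact: (rf_ne _ (e0 _) (e1 _)).2.
- by move=> j; rewrite /x1 hX !rfCX; exact: (rf_ne _ (e0 _) (e1 _)).2.
- by move=> j; rewrite /x0 /x1 hXX !rfCX; exact: (rf_ne _ e20 e21).2.
Qed.
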